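(* Let $G$ be a finite GVZ-group with $|\mathrm{cd}(G)|=2$. Then for every $\chi\in \mathrm{nl}(G)$, the groups $G/Z(\chi)$, $G/Z(G)$ and $G'/[Z(\chi),G]$ are elementary abelian, and $\exp(G/Z(\chi))=\exp(G/Z(G))=\exp(G'/[Z(\chi),G])$.
   Context: All groups are finite. $\mathrm{Irr}(G)$ is the set of complex irreducible characters of $G$, $\mathrm{nl}(G)$ the set of non-linear irreducible characters, and $\mathrm{cd}(G)=\{\chi(1):\chi\in\mathrm{Irr}(G)\}$. For a character $\chi$, $Z(\chi)=\{g\in G: |\chi(g)|=\chi(1)\}$. A nonabelian group $G$ is a GVZ-group if for every $\chi\in\mathrm{Irr}(G)$ we have $\chi(g)=0$ for all $g\in G\setminus Z(\chi)$. *)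

(* Defs.v *)
From mathcomp Require Import all_boot all_order all_algebra all_fingroup all_solvable all_field all_character.
Set Implicit Arguments. Unset Strict Implicit. Unset Printing Implicit Defensive.
Import GroupScope GRing.Theory Num.Theory.
Local Open Scope ring_scope.

(* cd(G) = { chi(1) : chi in Irr(G) }, as a duplicate-free list
   (algC is not a finType, so we use a seq; its size is |cd(G)|) *)
Definition cd (gT : finGroupType) (G : {group gT}) : seq algC :=
  undup [seq 'chi[G]_i 1%g | i : Iirr G].

Definition nonlinear_irr (gT : finGroupType) (G : {group gT}) (i : Iirr G) : Prop :=
  'chi[G]_i 1%g != 1%R.

Definition GVZ (gT : finGroupType) (G : {group gT}) : Prop :=
  ~~ abelian G /\
  forall (i : Iirr G) (g : gT), g \in G -> g \notin 'Z('chi[G]_i)%CF ->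
    'chi[G]_i g = 0%R.

Definition elem_abelian (gT : finGroupType) (A : {set gT}) : Prop :=
  exists p : nat, prime p /\ p.-abelem A.

(* Main.v *)
Require Import Defs.
From mathcomp Require Import all_boot all_order all_algebra all_fingroup all_solvable all_field all_character.
Import GroupScope GRing.Theory Num.Theory.


Lemma exp_abelem (hT : finGroupType) (A : {group hT}) p : prime p ->
  p.-abelem A -> A :!=: 1 -> exponent A = p.
Proof.
move=> pp; rewrite abelemE // => /andP[_ ed] ntA.
apply/(prime_nt_dvdP pp) => //.
by apply: contra ntA => /eqP e; rewrite trivg_exponent e.
Qed.

Lemma quo_abelem (hT : finGroupType) (H A : {group hT}) p : prime p ->
  A \subset 'N(H) -> abelian (A / H) -> (forall x, x \in A -> x ^+ p \in H) ->
  p.-abelem (A / H).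
Proof.
move=> pp nHA abA hx; apply/abelemP => //; split => // _ /morphimP[x Nx Ax ->].
by rewrite -morphX //; apply: coset_id; apply: hx.
Qed.

Section GVZ.
Variables (gT : finGroupType) (G : {group gT}).
Hypothesis hG : GVZ G.
Hypothesis hcd : size (cd G) = 2%N.
Local Open Scope ring_scope.

Local Notation Zc j := ('Z(('chi[G]_j)%R)%CF).
Local Notation Kc j := (cfker ('chi[G]_j)%R).

Lemma gvz_deg (j : Iirr G) : ('chi_j 1%g) ^+ 2 = (#|G : Zc j|)%:R%R.
Proof.
apply/eqP; rewrite irr1_bound; apply/cfun_onP => x xZ.
case Gx: (x \in G); last by rewrite cfun0 ?Gx.
by case: hG => _ /(_ j x Gx xZ).
Qed.

Lemma deg_eq {i j : Iirr G} : nonlinear_irr i -> nonlinear_irr j ->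
  'chi_i 1%g = 'chi_j 1%g.
Proof.
rewrite /nonlinear_irr => ni nj; apply/eqP/negPn/negP => nij.
have: (size [:: 1%R; 'chi_i 1%g; 'chi_j 1%g] <= size (cd G))%N.
  apply: uniq_leq_size.
    by rewrite /= !inE negb_or eq_sym ni eq_sym nj nij.
  move=> a; rewrite !inE /cd mem_undup => /or3P[] /eqP ->;
    apply/mapP.
  - by exists 0; rewrite ?mem_enum // irr0 cfun11.
  - by exists i; rewrite ?mem_enum.
  - by exists j; rewrite ?mem_enum.
by rewrite hcd.
Qed.

Lemma index_eq {i j : Iirr G} : nonlinear_irr i -> nonlinear_irr j ->
  #|G : Zc i| = #|G : Zc j|.
Proof.
by move=> ni nj; apply/eqP; rewrite -eqC_nat -!gvz_deg (deg_eq ni nj).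
Qed.

Lemma idx_gt1 {i : Iirr G} : nonlinear_irr i -> (1 < #|G : Zc i|)%N.
Proof.
move=> ni; have := gvz_deg i; rewrite irr1_degree -natrX => /eqP.
rewrite eqC_nat => /eqP <-.
have := irr1_neq0 i; move: ni; rewrite /nonlinear_irr irr1_degree.
case: (irr_degree _) => [|[|n]] /=; first by rewrite eqxx.
  by rewrite eqxx.
by move=> _ _; rewrite !expnS mulnA ltn_Pmull.
Qed.

Lemma CZ (j : Iirr G) x : x \in G ->
  (forall y, y \in G -> [~ x, y] \in Kc j) -> x \in Zc j.
Proof.
move=> Gx hx.
have nKG := normal_norm (cfker_normal ('chi[G]_j)%R).
have Nx := subsetP nKG x Gx.
have: coset (Kc j) x \in 'Z(G / Kc j).
  rewrite inE mem_quotient //=; apply/centP => _ /morphimP[y Ny Gy ->].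
  apply/commgP; rewrite -morphR //= coset_id //; exact: hx.
rewrite -cfcenter_eq_center => hZ.
have := mem_morphpre Nx hZ.
by rewrite quotientGK ?cfker_center_normal.
Qed.

Lemma EX {K : {group gT}} : K <| G -> ~~ ((G^`(1))%g \subset K) ->
  exists j : Iirr G, nonlinear_irr j /\ K \subset Kc j.
Proof.
move=> nsKG nsub.
have nab : ~~ abelian (G / K).
  by apply: contra nsub => /(der1_min (normal_norm nsKG)).
have /forallPn [j nlj] : ~~ [forall j : Iirr (G / K), ('chi_j)%R \is a linear_char].
  by apply: contra nab => /forallP /char_abelianP.
exists (mod_Iirr j); split; last by rewrite mod_IirrE // cfker_mod.
rewrite /nonlinear_irr mod_IirrE // cfMod1.
by move: nlj; rewrite qualifE/= irr_char.
Qed.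

Lemma M_eq {i j : Iirr G} : nonlinear_irr i -> nonlinear_irr j ->
  Zc i \subset Zc j -> Zc j = Zc i.
Proof.
move=> ni nj sij; apply/eqP; rewrite eq_sym eqEcard sij /=.
have := Lagrange (cfcenter_sub ('chi[G]_i)%R).
have := Lagrange (cfcenter_sub ('chi[G]_j)%R).
rewrite (index_eq ni nj) => <- /eqP.
rewrite eqn_pmul2r ?indexg_gt0 // => /eqP ->.
by [].
Qed.

Lemma ZGcomm (j : Iirr G) : [~: Zc j, G] \subset Kc j.
Proof.
have nKG := normal_norm (cfker_normal ('chi[G]_j)%R).
rewrite -quotient_cents2 ?(subset_trans (cfcenter_sub _)) //.
apply: subset_trans (cfcenter_subset_center _) _.
by rewrite /center subsetIr.
Qed.

Lemma D_ne {j : Iirr G} : nonlinear_irr j -> Kc j = Zc j -> False.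
Proof.
move=> nj eKZ.
have vanish : forall x, x \in G -> x \notin Kc j -> ('chi_j)%R x = 0.
  by move=> x Gx; rewrite eKZ; case: hG => _ /(_ j x Gx).
have : '[('chi_j)%R, 1] != 0.
  rewrite cfdotE mulf_eq0 negb_or invr_eq0 neq0CG /=.
  rewrite (eq_bigr (fun x => if x \in Kc j then ('chi_j)%R 1%g else 0)); last first.
    move=> x Gx; rewrite cfun1E Gx conjC1 mulr1.
    case: ifP => [/cfker1 -> // | /negbT]; exact: vanish.
  rewrite -big_mkcondr sumr_const mulrn_eq0 negb_or irr1_neq0 andbT.
  rewrite -lt0n; apply/card_gt0P; exists 1%g.
  by rewrite unfold_in /= group1 group1.
rewrite -(irr0 G) cfdot_irr; case: (j =P 0) => [ej _|_]; last by rewrite eqxx.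
by move: nj; rewrite /nonlinear_irr ej irr0 cfun11 eqxx.
Qed.

Lemma Ab {i : Iirr G} : nonlinear_irr i -> (G^`(1))%g \subset Zc i.
Proof.
move=> ni; apply/idPn => nsub.
have [j [nj sZK]] := EX (cfcenter_normal ('chi[G]_i)%R) nsub.
have sKZ : Kc j \subset Zc j := normal_sub (cfker_center_normal _).
have eZ := M_eq ni nj (subset_trans sZK sKZ).
apply: (D_ne nj); apply/eqP; rewrite eqEsubset sKZ eZ sZK.
by [].
Qed.

Local Open Scope group_scope.

Lemma comm_mod (i : Iirr G) (M : {group gT}) a b : M <| G ->
  [~: Zc i, G] \subset M -> a \in Zc i -> b \in G ->
  commute (coset M a) (coset M b).
Proof.
move=> nsMG sZM aZ bG; have nMG := normal_norm nsMG.
have aG := subsetP (cfcenter_sub ('chi[G]_i)%R) a aZ.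
apply/commgP/eqP; rewrite -morphR ?(subsetP nMG) //.
by apply: coset_id; rewrite (subsetP sZM) // mem_commg.
Qed.

Lemma S_group (i : Iirr G) (M : {group gT}) p : M <| G ->
  [~: Zc i, G] \subset M -> group_set [set z in Zc i | z ^+ p \in M].
Proof.
move=> nsMG sZM; have nMG := normal_norm nsMG.
have sZG := cfcenter_sub ('chi[G]_i)%R.
apply/group_setP; split; first by rewrite inE group1 expg1n group1.
move=> a b; rewrite !inE => /andP[aZ aM] /andP[bZ bM]; rewrite groupM //=.
have aG := subsetP sZG a aZ; have bG := subsetP sZG b bZ.
apply: coset_idr; first by rewrite (subsetP nMG) // groupX // groupM.
rewrite morphX ?(subsetP nMG) ?groupM // morphM ?(subsetP nMG) //.
rewrite expgMn; last exact: comm_mod nsMG sZM aZ bG.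
by rewrite -!morphX ?(subsetP nMG) //= (coset_id aM) (coset_id bM) mulg1.
Qed.

Lemma bil {i : Iirr G} {M : {group gT}} {x y} k : M <| G ->
  [~: Zc i, G] \subset M -> (G^`(1))%g \subset Zc i -> x \in G -> y \in G ->
  coset M [~ x ^+ k, y] = coset M ([~ x, y] ^+ k).
Proof.
move=> nsMG sZM sGZ xG yG; have nMG := normal_norm nsMG.
have NM z : z \in G -> z \in 'N(M) by move=> zG; rewrite (subsetP nMG).
rewrite (morphR (coset_morphism M)) ?NM ?groupX //.
rewrite (morphX (coset_morphism M)) ?NM ?groupR //.
rewrite (morphX (coset_morphism M)) ?NM //.
rewrite (morphR (coset_morphism M)) ?NM //=.
apply: commXg; apply: commute_sym.
have cG : [~ x, y] \in G by rewrite groupR.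
rewrite -(morphR (coset_morphism M)) ?NM //.
have cZ : [~ x, y] \in Zc i by apply: (subsetP sGZ); rewrite derg1 mem_commg.
  2: by rewrite groupR.
exact: comm_mod nsMG sZM cZ xG.
Qed.

Lemma cmid (H : {group gT}) x : x \in H -> (coset_morphism H) x = 1.
Proof. exact: coset_id. Qed.

Lemma expZ (i : Iirr G) p : nonlinear_irr i -> prime p -> (p %| #|G : Zc i|)%N ->
  forall x, x \in G -> x ^+ p \in Zc i.
Proof.
move=> ni pp pd.
have nsZG := cfcenter_normal ('chi[G]_i)%R.
have nsNG := cfker_normal ('chi[G]_i)%R.
have nNG := normal_norm nsNG; have nZG := normal_norm nsZG.
have sZG := cfcenter_sub ('chi[G]_i)%R.
have sZN := ZGcomm i.
have sGZ := Ab ni.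
have sNZ : Kc i \subset Zc i := normal_sub (cfker_center_normal _).
pose S := Group (@S_group i _ p nsNG sZN).
have inS z : (z \in S) = (z \in Zc i) && (z ^+ p \in Kc i) by rewrite inE.
have sNS : Kc i \subset S.
  by apply/subsetP => z zN; rewrite inS (subsetP sNZ) //= groupX.
have key x : x \in G -> (forall y, y \in G -> [~ x, y] ^+ p \in Kc i) ->
    x ^+ p \in Zc i.
  move=> xG hx; apply: CZ; first by rewrite groupX.
  move=> y yG; apply: coset_idr; first by rewrite (subsetP nNG) // groupR ?groupX.
  by rewrite (bil p nsNG sZN sGZ xG yG) coset_id // hx.
case: (boolP ((G^`(1))%g \subset S)) => [sGS | nGS].
  move=> x xG; apply: key => // y yG.
  have : [~ x, y] \in S by rewrite (subsetP sGS) // derg1 mem_commg.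
  by rewrite inS => /andP[_ ->].
exfalso.
have nsSG : S <| G.
  apply/andP; split.
    by apply/subsetP => z; rewrite inS => /andP[zZ _]; apply: (subsetP sZG).
  apply/subsetP => g gG; rewrite inE; apply/subsetP => w; rewrite mem_conjg.
  rewrite !inS => /andP[uZ uN].
  have gNZ := subsetP nZG g gG; have gNN := subsetP nNG g gG.
  rewrite -(conjgKV g w) memJ_norm // uZ /= -conjXg memJ_norm //.
have sZGS : [~: Zc i, G] \subset S := subset_trans sZN sNS.
have [j [nj sSK]] := EX nsSG nGS.
have sZZj : Zc i \subset Zc j.
  apply/subsetP => z zZ; apply: CZ; first exact: (subsetP sZG).
  by move=> y yG; apply: (subsetP sSK); apply: (subsetP sZGS); rewrite mem_commg.
have eZ := M_eq ni nj sZZj.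
have : (p %| #|(G / Zc i)%g|)%N by rewrite card_quotient.
case/(Cauchy pp) => xb /morphimP[x0 Nx0 Gx0 ->] ox.
have x0Z : x0 \notin Zc i.
  apply/negP => x0Z; move: ox; rewrite cmid // order1 => p1.
  by move: pp; rewrite -p1.
have x0pZ : x0 ^+ p \in Zc i.
  apply: coset_idr; first by rewrite groupX.
  by rewrite morphX // -ox expg_order.
apply: (negP x0Z); rewrite -eZ; apply: CZ => // y yG.
apply: (subsetP sSK); rewrite inS; apply/andP; split.
  by apply: (subsetP sGZ); rewrite derg1 mem_commg.
apply: coset_idr; first by rewrite (subsetP nNG) // groupX // groupR.
rewrite -(bil p nsNG sZN sGZ Gx0 yG) coset_id //.
by apply: (subsetP sZN); rewrite mem_commg.
Qed.

Lemma lin_Z (j : Iirr G) : ~ nonlinear_irr j -> Zc j = G.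
Proof.
move=> /negP; rewrite /nonlinear_irr negbK => /eqP e1.
have := gvz_deg j; rewrite e1 expr1n => /eqP; rewrite (eqC_nat 1%N) eq_sym.
rewrite indexg_eq1 => sGZ; apply/eqP; rewrite eqEsubset sGZ.
by rewrite cfcenter_sub.
Qed.

Lemma main_sec (i : Iirr G) : nonlinear_irr i ->
    [/\ elem_abelian (G / 'Z(('chi[G]_i)%R)%CF)%g,
        elem_abelian (G / 'Z(G))%g,
        elem_abelian (G^`(1) / [~: 'Z(('chi[G]_i)%R)%CF, G])%g,
        exponent (G / 'Z(('chi[G]_i)%R)%CF)%g = exponent (G / 'Z(G))%g &
        exponent (G / 'Z(G))%g = exponent (G^`(1) / [~: 'Z(('chi[G]_i)%R)%CF, G])%g].
Proof.
move=> ni.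
pose p := pdiv #|G : Zc i|.
have pp : prime p := pdiv_prime (idx_gt1 ni).
have pd : (p %| #|G : Zc i|)%N := pdiv_dvd _.
have nsZG := cfcenter_normal ('chi[G]_i)%R.
have nZG := normal_norm nsZG.
have sZG := cfcenter_sub ('chi[G]_i)%R.
have LO (j : Iirr G) : nonlinear_irr j \/ ~ nonlinear_irr j.
  by rewrite /nonlinear_irr; case: (_ != _); [left | right].
have F1 j : (G^`(1))%g \subset Zc j.
  case: (LO j) => [nj | nj]; first exact: Ab nj.
  by rewrite lin_Z // der_sub.
have F2 j x : x \in G -> x ^+ p \in Zc j.
  case: (LO j) => [nj | nj] xG; last by rewrite lin_Z // groupX.
  have e := index_eq ni nj; apply: expZ nj pp _ x xG; by rewrite -e.
have F3 x : x \in G -> x ^+ p \in 'Z(G).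
  by move=> xG; rewrite -cap_cfcenter_irr; apply/bigcapP => j _; apply: F2.
have F4 : (G^`(1))%g \subset 'Z(G).
  by rewrite -cap_cfcenter_irr; apply/bigcapsP => j _; apply: F1.
have nsMG : [~: Zc i, G] <| G.
  apply/andP; split; last by apply: normsR => //; apply: normG.
  by rewrite commg_subr (subset_trans sZG (normG G)).
have nMG := normal_norm nsMG.
pose T := Group (@S_group i [~: Zc i, G]%G p nsMG (subxx _)).
have inT z : (z \in T) = (z \in Zc i) && (z ^+ p \in [~: Zc i, G]) by rewrite inE.
have sGT : (G^`(1))%g \subset T.
  rewrite derg1 gen_subG; apply/subsetP => _ /imset2P[x y xG yG ->].
  rewrite inT; apply/andP; split; first by apply: (subsetP (F1 i)); rewrite derg1 mem_commg.
  apply: coset_idr; first by rewrite (subsetP nMG) // groupX // groupR.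
  rewrite -(bil p nsMG (subxx _) (F1 i) xG yG) cmid //.
  by rewrite mem_commg // F2.
have A1 : p.-abelem (G / Zc i).
  apply: quo_abelem => //; first exact: sub_der1_abelian (F1 i).
  by move=> x xG; apply: F2.
have A2 : p.-abelem (G / 'Z(G)).
  apply: quo_abelem => //; first exact: normal_norm (center_normal G).
  exact: sub_der1_abelian F4.
have A3 : p.-abelem ((G^`(1))%g / [~: Zc i, G]).
  apply: quo_abelem => //; first exact: subset_trans (der_sub 1 G) nMG.
    apply: quotient_cents2r; apply: commgSS (F1 i) (der_sub 1 G).
  by move=> x /(subsetP sGT); rewrite inT => /andP[_ ->].
have E1 : exponent (G / Zc i) = p.
  apply: exp_abelem => //; apply/negP => /eqP e.
  have : G / Zc i \subset [1] by rewrite e.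
  rewrite quotient_sub1 // -indexg_eq1 => /eqP e1.
  by have := idx_gt1 ni; rewrite e1.
have E2 : exponent (G / 'Z(G)) = p.
  apply: exp_abelem => //; apply/negP => /eqP e.
  have : G / 'Z(G) \subset [1] by rewrite e.
  rewrite quotient_sub1 ?(normal_norm (center_normal G)) // => sGZ.
  case: hG => /negP nab _; apply: nab; apply/center_idP; apply/eqP.
  by rewrite eqEsubset sGZ center_sub.
have E3 : exponent ((G^`(1))%g / [~: Zc i, G]) = p.
  apply: exp_abelem => //; apply/negP => /eqP e.
  have : (G^`(1))%g / [~: Zc i, G] \subset [1] by rewrite e.
  rewrite quotient_sub1 ?(subset_trans (der_sub 1 G) nMG) // => sGM.
  have : 'chi_i \is a linear_char.
    by rewrite lin_irr_der1 (subset_trans sGM (ZGcomm i)).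
  by move/lin_char1 => e11; move: ni; rewrite /nonlinear_irr e11 eqxx.
split; first by exists p.
- by exists p.
- by exists p.
- by rewrite E1 E2.
- by rewrite E2 E3.
Qed.
End GVZ.

Theorem mainTheorem1 (gT : finGroupType) (G : {group gT}) :
  GVZ G -> size (cd G) = 2%N ->
  forall i : Iirr G, nonlinear_irr i ->
    [/\ elem_abelian (G / 'Z(('chi[G]_i)%R)%CF)%g,
        elem_abelian (G / 'Z(G))%g,
        elem_abelian (G^`(1) / [~: 'Z(('chi[G]_i)%R)%CF, G])%g,
        exponent (G / 'Z(('chi[G]_i)%R)%CF)%g = exponent (G / 'Z(G))%g &
        exponent (G / 'Z(G))%g = exponent (G^`(1) / [~: 'Z(('chi[G]_i)%R)%CF, G])%g].
Proof. by move=> hG hcd i ni; apply: main_sec. Qed.
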